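(* Let $a_i:\mathbb{R}^n\to\mathbb{R}$ be convex and $L_a$-smooth, and suppose there exist $C_0>0$, $C_1\ge0$ with $\|\nabla a_i(x)\|_2^2\le C_0+C_1|a_i(x)|$ for all $x\in\mathbb{R}^n$. Then for every $\delta>0$, the function $x\mapsto p_\delta(a_i(x))$ is $\left(L_a+\frac{C_1}{4}+\frac{C_0}{4\delta}\right)$-smooth, i.e., its gradient is Lipschitz with this constant in the Euclidean norm.
   Context: $p_\delta(t)=\delta\log(1+\exp(t/\delta))$ is the softplus function with parameter $\delta>0$. A function is $L$-smooth if its gradient is $L$-Lipschitz w.r.t. $\|\cdot\|_2$. *)

(* Defs.v *)
From HB Require Import structures.
From mathcomp Require Import all_boot all_order all_algebra.
From mathcomp Require Import all_classical all_reals all_analysis.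
Set Implicit Arguments. Unset Strict Implicit. Unset Printing Implicit Defensive.
Import Order.TTheory GRing.Theory Num.Theory.
Import numFieldNormedType.Exports.
Local Open Scope ring_scope.

(* Euclidean norm on R^n (the default norm on 'rV_n in the library is the sup norm). *)
Definition norm2 {R : realType} {n : nat} (v : 'rV[R]_n) : R :=
  Num.sqrt (\sum_(i < n) v 0 i ^+ 2).

Definition grad {R : realType} {n : nat} (f : 'rV[R]_n -> R) (x : 'rV[R]_n)
  : 'rV[R]_n := \row_(i < n) derive f x (delta_mx 0 i).

Definition L_smooth {R : realType} {n : nat} (L : R) (f : 'rV[R]_n -> R) : Prop :=
  (forall x, differentiable f x) /\
  (forall x y, norm2 (grad f x - grad f y) <= L * norm2 (x - y)).

Definition convex_fun {R : realType} {n : nat} (f : 'rV[R]_n -> R) : Prop :=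
  forall (x y : 'rV[R]_n) (t : R), 0 <= t -> t <= 1 ->
    f (t *: x + (1 - t) *: y) <= t * f x + (1 - t) * f y.

Definition softplus {R : realType} (delta t : R) : R :=
  delta * ln (1 + expR (t / delta)).

(* Main.v *)
Require Import Defs.
From HB Require Import structures.
From mathcomp Require Import all_boot all_order all_algebra.
From mathcomp Require Import all_classical all_reals all_analysis.
From mathcomp Require Import ring lra.
Import Order.TTheory GRing.Theory Num.Theory.
Import numFieldNormedType.Exports.
Local Open Scope ring_scope.

Set Implicit Arguments. Unset Strict Implicit. Unset Printing Implicit Defensive.

Definition sig {R : realType} (u : R) : R := expR u / (1 + expR u).

Lemma sig_gt0 {R : realType} (u : R) : 0 < sig u.
Proof. by rewrite /sig divr_gt0 // ?addr_gt0 ?expR_gt0. Qed.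

Lemma sig_lt1 {R : realType} (u : R) : sig u < 1.
Proof.
rewrite /sig ltr_pdivrMr ?addr_gt0 ?expR_gt0 // mul1r; lra.
Qed.

Lemma one_sig {R : realType} (u : R) : 1 - sig u = (1 + expR u)^-1.
Proof.
have h : 1 + expR u != 0 by rewrite gt_eqF // addr_gt0 ?expR_gt0.
rewrite /sig; apply: (mulIf h); rewrite mulrBl mulVf // mulfVK //; lra.
Qed.

Lemma is_derive_sig {R : realType} (u : R) : is_derive u 1 sig (sig u * (1 - sig u)).
Proof.
have h : 1 + expR u != 0 by rewrite gt_eqF // addr_gt0 ?expR_gt0.
have D1 : is_derive u 1 ((cst 1) + expR) (0 + expR u) by exact: is_deriveD.
have D2 := @is_deriveV R (cst 1 + expR) u _ _ h D1.
have D3 := is_deriveM (is_derive_expR u) D2.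
have -> : (@sig R) = expR * (fun y => ((cst 1 + expR) y)^-1) by apply/funext.
apply: is_derive_eq D3 _.
rewrite one_sig /sig /= /GRing.scale /=.
rewrite add0r; set e := expR u; move: h; rewrite -/e => h.
have -> : (expR * (fun y => ((cst 1 + expR) y)^-1)) u = e / (1+e) by [].
have -> : (cst 1 + expR) u = 1 + e by [].
by field.
Qed.


Definition sigp {R : realType} (u : R) : R := sig u * (1 - sig u).

Lemma sigpE {R : realType} (u : R) : sigp u = (expR u + 2 + expR (- u))^-1.
Proof.
have h : 1 + expR u != 0 by rewrite gt_eqF // addr_gt0 ?expR_gt0.
have h2 : expR u != 0 by rewrite gt_eqF // expR_gt0.
rewrite /sigp one_sig /sig expRN.
set e := expR u. move: h h2; rewrite -/e => h h2.
have h3 : e + 2 + e^-1 != 0.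
  by rewrite gt_eqF // addr_gt0 ?invr_gt0 ?addr_gt0 ?expR_gt0.
have he : 0 < e by rewrite /e expR_gt0.
have h4 : (e + 2) * e + 1 != 0 by rewrite gt_eqF //; nra.
by field; rewrite h2 h4 h.
Qed.

Lemma exp32 (R : realType) : 4 <= expR (3 / 2 : R).
Proof.
have -> : (3 / 2 : R) = 16%:R * (3 / 32) by rewrite -[16%:R]/(16 : R); lra.
rewrite expRM_natl.
have h1 : (35 / 32 : R) <= expR (3 / 32) by have := expR_ge1Dx (3/32 : R); lra.
set x := expR (3 / 32 : R) in h1 *.
have e16 : x ^+ 16 = ((((x ^+ 2) ^+ 2) ^+ 2) ^+ 2) by rewrite -!exprM.
rewrite e16.
have h2 : (1196 / 1000 : R) <= x ^+ 2 by rewrite expr2; nra.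
have h3 : (143 / 100 : R) <= (x ^+ 2) ^+ 2 by rewrite [X in _ <= X]expr2; nra.
have h4 : (204 / 100 : R) <= ((x ^+ 2) ^+ 2) ^+ 2 by rewrite [X in _ <= X]expr2; nra.
by rewrite [X in _ <= X]expr2; nra.
Qed.

Lemma expR_ge4 {R : realType} (u : R) : 4 * u - 2 <= expR u.
Proof.
have [hu|hu] := leP u (1/2).
  by have := expR_gt0 u; lra.
have -> : u = 3/2 + (u - 3/2) by lra.
rewrite expRD.
have := expR_ge1Dx (u - 3/2); have := exp32 R; have := expR_gt0 (u - 3/2).
nra.
Qed.

Lemma sigp_le {R : realType} (u : R) : sigp u <= 1/4.
Proof.
rewrite sigpE.
have hp : 0 < expR u + 2 + expR (- u) by rewrite !addr_gt0 ?expR_gt0.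
rewrite -[_^-1]mul1r ler_pdivrMr //.
have h := expR_ge1Dx u; have h' := expR_ge1Dx (- u).
lra.
Qed.

Lemma abs_sigp_le {R : realType} (u : R) : `|u| * sigp u <= 1/4.
Proof.
rewrite sigpE.
have hp : 0 < expR u + 2 + expR (- u) by rewrite !addr_gt0 ?expR_gt0.
rewrite ler_pdivrMr //.
have h := expR_ge4 u; have h' := expR_ge4 (- u).
have := expR_gt0 u; have := expR_gt0 (- u).
case: (ler0P u) => hu; rewrite ?ler0_norm ?gtr0_norm //; lra.
Qed.

Lemma sigp_ge0 {R : realType} (u : R) : 0 <= sigp u.
Proof. by rewrite sigpE invr_ge0 ltW // !addr_gt0 ?expR_gt0. Qed.



Lemma is_derive_softplus (R : realType) (d t : R) : 0 < d ->
  is_derive t 1 (softplus d) (sig (t / d)).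
Proof.
move=> d0.
have D0 : is_derive t 1 (d^-1 \*: id) (d^-1 *: 1) by exact: is_deriveZ.
have D1 := is_derive1_comp (is_derive_expR _) D0.
have D2 : is_derive t 1 (cst 1 + (expR \o (d^-1 \*: id)))
   (0 + expR ((d^-1 \*: id) t) * (d^-1 *: 1)).
  by apply: is_deriveD.
have hp : 0 < (cst 1 + (expR \o (d^-1 \*: id))) t.
  by rewrite /= addr_gt0 ?expR_gt0.
have D3 := is_derive1_comp (is_derive1_ln hp) D2.
have D4 := @is_deriveZ R _ _ _ d _ _ _ D3.
have -> : softplus d = d \*: (@ln R \o (cst 1 + (expR \o (d^-1 \*: id)))).
  by apply/funext => y; rewrite /softplus /= [y / d]mulrC.
apply: (is_derive_eq D4).
rewrite /sig /= /GRing.scale /= add0r mulr1 [t / d]mulrC.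
set e := expR _.
have : 0 < e by rewrite expR_gt0.
move=> he.
have -> : (cst 1 + (expR \o d^-1 \*: id)) t = 1 + e by [].
have hd : d != 0 by rewrite gt_eqF.
have h1 : 1 + e != 0 by rewrite gt_eqF //; lra.
by field; rewrite hd h1.
Qed.

Definition dot {R : realType} {n : nat} (u v : 'rV[R]_n) : R :=
  \sum_(i < n) u 0 i * v 0 i.

Lemma dot_ge0 (R : realType) n (v : 'rV[R]_n) : 0 <= dot v v.
Proof. by apply: sumr_ge0 => i _; rewrite -expr2 sqr_ge0. Qed.

Lemma norm2E (R : realType) n (v : 'rV[R]_n) : norm2 v = Num.sqrt (dot v v).
Proof. by rewrite /norm2 /dot; under eq_bigr do rewrite expr2. Qed.

Lemma norm2_ge0 (R : realType) n (v : 'rV[R]_n) : 0 <= norm2 v.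
Proof. exact: sqrtr_ge0. Qed.

Lemma norm2_sq (R : realType) n (v : 'rV[R]_n) : norm2 v ^+ 2 = dot v v.
Proof. by rewrite norm2E sqr_sqrtr // dot_ge0. Qed.

Lemma dotC (R : realType) n (u v : 'rV[R]_n) : dot u v = dot v u.
Proof. by apply: eq_bigr => i _; rewrite mulrC. Qed.

Lemma dotDr (R : realType) n (u v w : 'rV[R]_n) : dot u (v + w) = dot u v + dot u w.
Proof. by rewrite /dot -big_split; apply: eq_bigr => i _; rewrite mxE mulrDr. Qed.

Lemma dotNr (R : realType) n (u v : 'rV[R]_n) : dot u (- v) = - dot u v.
Proof. by rewrite /dot -sumrN; apply: eq_bigr => i _; rewrite mxE mulrN. Qed.

Lemma dotBr (R : realType) n (u v w : 'rV[R]_n) : dot u (v - w) = dot u v - dot u w.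
Proof. by rewrite dotDr dotNr. Qed.

Lemma dotZr (R : realType) n (c : R) (u v : 'rV[R]_n) : dot u (c *: v) = c * dot u v.
Proof. by rewrite /dot mulr_sumr; apply: eq_bigr => i _; rewrite mxE mulrCA. Qed.

Lemma dotDl (R : realType) n (u v w : 'rV[R]_n) : dot (v + w) u = dot v u + dot w u.
Proof. by rewrite dotC dotDr !(dotC u). Qed.

Lemma dotZl (R : realType) n (c : R) (u v : 'rV[R]_n) : dot (c *: v) u = c * dot v u.
Proof. by rewrite dotC dotZr dotC. Qed.

Lemma CS2 (R : realType) n (u v : 'rV[R]_n) : dot u v ^+ 2 <= dot u u * dot v v.
Proof.
have H : 0 <= \sum_(i < n) \sum_(j < n) (u 0 i * v 0 j - u 0 j * v 0 i) ^+ 2.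
  by apply: sumr_ge0 => i _; apply: sumr_ge0 => j _; rewrite sqr_ge0.
set X := fun i j : 'I_n => (u 0 i * u 0 i) * (v 0 j * v 0 j).
set Z := fun i j : 'I_n => (u 0 i * v 0 i) * (u 0 j * v 0 j).
have E : \sum_(i < n) \sum_(j < n) (u 0 i * v 0 j - u 0 j * v 0 i) ^+ 2
   = \sum_(i < n) \sum_(j < n) X i j + \sum_(i < n) \sum_(j < n) X j i
     - 2 * \sum_(i < n) \sum_(j < n) Z i j.
  rewrite mulr_sumr -big_split -sumrB; apply: eq_bigr => i _.
  rewrite mulr_sumr -big_split -sumrB; apply: eq_bigr => j _.
  rewrite /X /Z /=; move: (u 0 i) (v 0 j) (u 0 j) (v 0 i) => a b c d; ring.
have EX : \sum_(i < n) \sum_(j < n) X i j = dot u u * dot v v.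
  by rewrite /dot big_distrlr.
have EX' : \sum_(i < n) \sum_(j < n) X j i = dot u u * dot v v.
  by rewrite exchange_big.
have EZ : \sum_(i < n) \sum_(j < n) Z i j = dot u v ^+ 2.
  by rewrite /dot expr2 big_distrlr.
rewrite E EX EX' EZ in H.
lra.
Qed.

Lemma CS (R : realType) n (u v : 'rV[R]_n) : `|dot u v| <= norm2 u * norm2 v.
Proof.
rewrite !norm2E -sqrtrM ?dot_ge0 // -sqrtr_sqr.
by rewrite ler_wsqrtr // CS2.
Qed.

Lemma CS' (R : realType) n (u v : 'rV[R]_n) : dot u v <= norm2 u * norm2 v.
Proof. exact: le_trans (ler_norm _) (CS u v). Qed.

Lemma norm2Z (R : realType) n (c : R) (v : 'rV[R]_n) : norm2 (c *: v) = `|c| * norm2 v.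
Proof.
rewrite !norm2E dotZl dotZr mulrA -expr2 sqrtrM ?sqr_ge0 //.
by rewrite sqrtr_sqr.
Qed.

Lemma norm2N (R : realType) n (v : 'rV[R]_n) : norm2 (- v) = norm2 v.
Proof. by rewrite -scaleN1r norm2Z normrN normr1 mul1r. Qed.

Lemma norm2D (R : realType) n (u v : 'rV[R]_n) : norm2 (u + v) <= norm2 u + norm2 v.
Proof.
have h0 : 0 <= norm2 u + norm2 v by rewrite addr_ge0 ?norm2_ge0.
rewrite [X in X <= _]norm2E -[norm2 u + norm2 v]ger0_norm // -sqrtr_sqr.
rewrite ler_wsqrtr // dotDl !dotDr (dotC v u).
have := CS' u v; have := norm2_sq u; have := norm2_sq v.
have := norm2_ge0 u; have := norm2_ge0 v.
nra.
Qed.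

Lemma diff_dot (R : realType) n (a : 'rV[R]_n -> R) z v :
  differentiable a z -> 'd a z v = dot (grad a z) v.
Proof.
move=> da.
rewrite [in LHS](matrix_sum_delta v) big_ord1 linear_sum /dot.
apply: eq_bigr => i _; rewrite linearZ /= mxE -deriveE // mulrC.
by rewrite (_ : (0 : 'I_1) = ord0) //; apply/val_inj.
Qed.

Lemma diff1 (R : realType) (f : R -> R) (t r df : R) :
  is_derive t 1 f df -> 'd f t r = r * df.
Proof.
move=> D.
have df1 : differentiable f t by apply/derivable1_diffP; case: D.
rewrite -[r in LHS]mulr1 -[r * 1]/(r *: (1:R)) linearZ /= -deriveE //.
by rewrite derive_val.
Qed.

Lemma grad_softplus (R : realType) n (a : 'rV[R]_n -> R) d z :
  0 < d -> differentiable a z ->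
  grad (fun x => softplus d (a x)) z = sig (a z / d) *: grad a z.
Proof.
move=> d0 da.
have dsp : forall t, differentiable (softplus d) t.
  by move=> t; apply/derivable1_diffP; case: (is_derive_softplus t d0).
apply/rowP => i; rewrite !mxE.
change (fun x => softplus d (a x)) with (softplus d \o a).
rewrite deriveE; last exact: differentiable_comp.
rewrite diff_comp //= (diff1 _ (is_derive_softplus _ d0)) -deriveE //.
by rewrite mulrC.
Qed.

Lemma is_derive_line (R : realType) n (a : 'rV[R]_n -> R) d x D (t : R) :
  (forall z, differentiable a z) ->
  is_derive t 1 (fun s => sig (a (x + s *: D) / d))
    (sigp (a (x + t *: D) / d) * (dot (grad a (x + t *: D)) D / d)).
Proof.
move=> da.
pose line := cst x + ( *:%R^~ D) : R -> 'rV[R]_n.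
have Ld : is_diff t line (0 + ( *:%R^~ D)) by exact: is_diffD.
have dl : differentiable line t by case: Ld.
have Dh : is_derive t 1 (a \o line) (dot (grad a (x + t *: D)) D).
  apply: DeriveDef.
    by apply/derivable1_diffP; apply: differentiable_comp.
  rewrite deriveE; last by apply: differentiable_comp.
  rewrite diff_comp // /= (diff_val (is_diff_def := Ld)) /= add0r scale1r diff_dot //.
have Dh2 := @is_deriveZ R _ _ _ d^-1 _ _ _ Dh.
have D3 := is_derive1_comp (is_derive_sig _) Dh2.
have -> : (fun s => sig (a (x + s *: D) / d)) = sig \o (d^-1 \*: (a \o line)).
  by apply/funext => s; rewrite /= mulrC.
apply: (is_derive_eq D3).
rewrite /sigp /= /line /= [_ / d]mulrC [dot _ _ / d]mulrC //.
Qed.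

Lemma step_bound (R : realType) n (a : 'rV[R]_n -> R) (La C0 C1 d : R)
  (x D w : 'rV[R]_n) (t0 t1 : R) :
  (forall z, differentiable a z) ->
  (forall x y, norm2 (grad a x - grad a y) <= La * norm2 (x - y)) ->
  (forall x, norm2 (grad a x) ^+ 2 <= C0 + C1 * `|a x|) ->
  0 < d -> 0 <= C0 -> 0 <= C1 -> 0 <= t0 -> t0 <= t1 -> t1 <= 1 ->
  dot w (sig (a (x + t1 *: D) / d) *: grad a (x + t1 *: D))
  - dot w (sig (a (x + t0 *: D) / d) *: grad a (x + t0 *: D))
  <= norm2 w * norm2 D * (t1 - t0) *
     (La + C1 / 4 + C0 / (4 * d) +
      (norm2 (grad a x) + `|La| * norm2 D) * `|La| * norm2 D * (t1 - t0) / (4 * d)).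
Proof.
move=> da hL hg d0 C00 C10 t00 t01 t11.
set z0 := x + t0 *: D; set z1 := x + t1 *: D.
set s0 := sig (a z0 / d); set s1 := sig (a z1 / d).
set g0 := grad a z0; set g1 := grad a z1.
set h := t1 - t0.
set nw := norm2 w; set nD := norm2 D.
have h0 : 0 <= h by rewrite /h subr_ge0.
have nw0 : 0 <= nw by exact: norm2_ge0.
have nD0 : 0 <= nD by exact: norm2_ge0.
have ndiff : forall u v : R, norm2 ((x + u *: D) - (x + v *: D)) = `|u - v| * nD.
  by move=> u v; rewrite opprD addrACA subrr add0r -scalerBl norm2Z.
have e1 : dot w (s1 *: g1) - dot w (s0 *: g0)
    = s1 * dot w (g1 - g0) + (s1 - s0) * dot w g0.
  rewrite !dotZr dotBr; ring.
rewrite e1.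
have hA : s1 * dot w (g1 - g0) <= nw * (La * nD * h).
  have s10 : 0 < s1 := sig_gt0 _.
  have s11 : s1 < 1 := sig_lt1 _.
  have c1 := CS w (g1 - g0).
  have c2 : norm2 (g1 - g0) <= La * nD * h.
    have := hL z1 z0; rewrite /z1 /z0 ndiff ger0_norm //.
    by rewrite -/g1 -/g0 -/h [h * nD]mulrC mulrA.
  have c3 : `|dot w (g1 - g0)| <= nw * (La * nD * h).
    by apply: le_trans c1 _; apply: ler_wpM2l.
  have c4 := ler_norm (dot w (g1 - g0)).
  have c5 := normr_ge0 (dot w (g1 - g0)).
  nra.
pose f := fun s : R => sig (a (x + s *: D) / d).
have cont : {within `[t0, t1], continuous f}%classic.
  apply/continuous_subspaceT => r.
  apply/differentiable_continuous/derivable1_diffP.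
  by case: (@is_derive_line R n a d x D r da).
have [xi hxi Exi] := MVT_segment t01 (fun t _ => @is_derive_line R n a d x D t da) cont.
have [xi0 xi1] : t0 <= xi /\ xi <= t1.
  by move: hxi; rewrite in_itv /= => /andP[].
rewrite -/h in Exi.
have -> : s1 - s0 = f t1 - f t0 by [].
rewrite Exi.
set zx := x + xi *: D.
set Q := sigp (a zx / d).
set X := norm2 (grad a zx).
set Bd := norm2 (grad a x) + `|La| * nD.
have Q0 : 0 <= Q by exact: sigp_ge0.
have Q4 : Q <= 1/4 by exact: sigp_le.
have X0 : 0 <= X by exact: norm2_ge0.
have hdD : `|dot (grad a zx) D| <= X * nD by exact: CS.
have hdw : `|dot w g0| <= nw * norm2 g0 by exact: CS.
have ng00 : 0 <= norm2 g0 by exact: norm2_ge0.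
have hLa : forall u v : R, 0 <= u <= 1 -> 0 <= v <= 1 ->
    norm2 (grad a (x + u *: D) - grad a (x + v *: D)) <= `|La| * (`|u - v| * nD).
  move=> u v _ _; apply: le_trans (hL _ _) _; rewrite ndiff.
  apply: ler_wpM2r; first by rewrite mulr_ge0.
  exact: ler_norm.
have hg0 : norm2 g0 <= X + `|La| * nD * h.
  have -> : g0 = grad a zx + (g0 - grad a zx) by rewrite addrC subrK.
  apply: le_trans (norm2D _ _) _; rewrite lerD2l.
  have := hLa t0 xi; rewrite -/z0 -/zx -/g0.
  have hh : `|t0 - xi| <= h by rewrite distrC ger0_norm ?subr_ge0 // lerD2r.
  move=> /(_ _ _)/le_trans; apply.
  - by rewrite t00 /=; lra.
  - by apply/andP; split; lra.
  - rewrite -mulrA; apply: ler_wpM2l => //.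
    by rewrite mulrC; apply: ler_wpM2l.
have hXB : X <= Bd.
  rewrite /X; have -> : grad a zx = grad a x + (grad a zx - grad a x) by rewrite addrC subrK.
  apply: le_trans (norm2D _ _) _; rewrite /Bd lerD2l.
  have := hLa xi 0; rewrite scale0r addr0 subr0 => /(_ _ _)/le_trans; apply.
  - by apply/andP; split; lra.
  - by apply/andP; split; lra.
  - apply: ler_wpM2l => //; rewrite ger0_norm; last by lra.
    rewrite -[X in _ <= X]mul1r; apply: ler_wpM2r => //; lra.
have hQX : Q * X * X <= C0 / 4 + C1 * d / 4.
  have := hg zx; rewrite -/X => hX.
  have h1 : Q * X * X <= Q * (C0 + C1 * `|a zx|) by rewrite -mulrA -expr2 ler_wpM2l.
  have h2 : `|a zx| * Q <= d / 4.
    have := abs_sigp_le (a zx / d).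
    rewrite normrM (@gtr0_norm _ d^-1) ?invr_gt0 // -/Q => hh.
    have -> : `|a zx| = d * (`|a zx| * d^-1) by field; rewrite gt_eqF.
    rewrite -mulrA; have := ler_wpM2l (ltW d0) hh; lra.
  nra.
have hQXB : Q * X <= Bd / 4 by nra.
have habs : f t1 - f t0 = (Q * (dot (grad a zx) D / d)) * h by rewrite Exi.
have hB1 : (Q * (dot (grad a zx) D / d) * h) * dot w g0
    <= (Q * (X * nD) / d * h) * (nw * norm2 g0).
  apply: le_trans (ler_norm _) _; rewrite normrM.
  apply: ler_pM => //; rewrite ?normr_ge0 //.
  rewrite (normrM _ h) (ger0_norm h0) (normrM Q) (ger0_norm Q0) normrM normfV (gtr0_norm d0).
  apply: ler_wpM2r => //; rewrite mulrA; apply: ler_wpM2r; first by rewrite invr_ge0 ltW.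
  by apply: ler_wpM2l.
set P := nw * nD * h / d.
have P0 : 0 <= P by rewrite /P !mulr_ge0 // invr_ge0 ltW.
have eB : (Q * (X * nD) / d * h) * (nw * norm2 g0) = P * (Q * X * norm2 g0).
  by rewrite /P; field; rewrite gt_eqF.
have hB2 : Q * X * norm2 g0 <= Q * X * X + Q * X * (`|La| * nD * h).
  by rewrite -mulrDr; apply: ler_wpM2l => //; rewrite mulr_ge0.
have hB3 : Q * X * norm2 g0 <= C0 / 4 + C1 * d / 4 + Bd / 4 * (`|La| * nD * h).
  apply: le_trans hB2 _; apply: lerD => //.
  by apply: ler_wpM2r => //; rewrite !mulr_ge0.
have hB4 := ler_wpM2l P0 hB3.
have eF : P * (C0 / 4 + C1 * d / 4 + Bd / 4 * (`|La| * nD * h))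
   = nw * nD * h * (C1 / 4 + C0 / (4 * d) + Bd * `|La| * nD * h / (4 * d)).
  by rewrite /P; field; rewrite gt_eqF.
have eA : nw * (La * nD * h) = nw * nD * h * La by ring.
rewrite eB eF in hB1 hB4.
rewrite eA in hA.
rewrite -/Bd.
have : nw * nD * h * (La + C1 / 4 + C0 / (4 * d) + Bd * `|La| * nD * h / (4 * d))
   = nw * nD * h * La + nw * nD * h * (C1 / 4 + C0 / (4 * d) + Bd * `|La| * nD * h / (4 * d)) by ring.
move=> ->.
lra.
Qed.

Lemma lip_main (R : realType) n (a : 'rV[R]_n -> R) (La C0 C1 d : R) :
  (forall z, differentiable a z) ->
  (forall x y, norm2 (grad a x - grad a y) <= La * norm2 (x - y)) ->
  (forall x, norm2 (grad a x) ^+ 2 <= C0 + C1 * `|a x|) ->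
  0 < d -> 0 <= C0 -> 0 <= C1 ->
  forall x y,
  norm2 (sig (a x / d) *: grad a x - sig (a y / d) *: grad a y)
    <= (La + C1 / 4 + C0 / (4 * d)) * norm2 (x - y).
Proof.
move=> da hL hg d0 C00 C10 x y.
set G := fun z => sig (a z / d) *: grad a z.
rewrite -/(G x) -/(G y).
set K := La + C1 / 4 + C0 / (4 * d).
set D := y - x.
set w := G y - G x.
have -> : norm2 (G x - G y) = norm2 w by rewrite -norm2N opprB.
have -> : norm2 (x - y) = norm2 D by rewrite -norm2N opprB.
set nw := norm2 w; set nD := norm2 D.
have nw0 : 0 <= nw by exact: norm2_ge0.
have nD0 : 0 <= nD by exact: norm2_ge0.
have KD0 : 0 <= K * nD.
  have := hL y x; rewrite -/D -/nD => hh.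
  have := norm2_ge0 (grad a y - grad a x).
  have -> : K * nD = La * nD + C1 / 4 * nD + C0 / (4 * d) * nD by rewrite /K; ring.
  move=> h2.
  have : 0 <= C1 / 4 * nD by rewrite mulr_ge0 // divr_ge0.
  have : 0 <= C0 / (4 * d) * nD by rewrite mulr_ge0 // divr_ge0 // mulr_ge0 // ltW.
  lra.
set Bd := norm2 (grad a x) + `|La| * nD.
set E := Bd * `|La| * nD / (4 * d).
have claim : forall N : nat, (0 < N)%N -> nw ^+ 2 <= nw * nD * (K + E / N%:R).
  move=> N N0.
  have NR : (0 : R) < N%:R by rewrite ltr0n.
  pose phi := fun k : nat => dot w (G (x + (k%:R / N%:R) *: D)).
  have e0 : nw ^+ 2 = phi N - phi 0%N.
    rewrite /phi mul0r scale0r addr0 divff ?gt_eqF // scale1r /D (addrC x) subrK.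
    by rewrite norm2_sq /w dotBr.
  rewrite e0 -(telescope_sumr _ (leq0n N)).
  apply: le_trans (@ler_sum_nat _ 0 N _ (fun _ => nw * nD * N%:R^-1 * (K + E / N%:R)) _) _.
    move=> k /andP[_ kN].
    have t00 : (0 : R) <= k%:R / N%:R by rewrite divr_ge0 // ltW.
    have t01 : (k%:R / N%:R : R) <= k.+1%:R / N%:R.
      by rewrite ler_pM2r ?invr_gt0 // ler_nat.
    have t11 : (k.+1%:R / N%:R : R) <= 1.
      by rewrite ler_pdivrMr // mul1r ler_nat.
    have := @step_bound R n a La C0 C1 d x D w _ _ da hL hg d0 C00 C10 t00 t01 t11.
    have eh : (k.+1%:R / N%:R - k%:R / N%:R : R) = N%:R^-1.
      by rewrite -mulrBl -natr1 addrAC subrr add0r mul1r.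
    rewrite eh -/Bd => /le_trans; apply; rewrite le_eqVlt; apply/predU1P; left.
    rewrite /phi /G /K /E -/nw -/nD; field.
    by rewrite !gt_eqF.
  rewrite sumr_const_nat subn0 -mulr_natr.
  rewrite le_eqVlt; apply/predU1P; left; rewrite /K /E; field.
  by rewrite !gt_eqF.
have [->|nwn0] := eqVneq nw 0; first by [].
have nwp : 0 < nw by rewrite lt_def nwn0.
have Bd0 : 0 <= Bd by rewrite /Bd addr_ge0 ?norm2_ge0 // mulr_ge0.
have E0 : 0 <= E by rewrite /E !mulr_ge0 // invr_ge0 mulr_ge0 // ltW.
rewrite leNgt; apply/negP => hlt.
set eps := nw - K * nD.
have eps0 : 0 < eps by rewrite /eps subr_gt0.
set M := nD * E.
have M0 : 0 <= M by rewrite mulr_ge0.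
have hb := archi_boundP (divr_ge0 M0 (ltW eps0)).
set b := Num.Def.archi_bound _ in hb.
have NR : (0 : R) < b.+1%:R by rewrite ltr0n.
have hbN : M / eps < b.+1%:R by apply: lt_trans hb _; rewrite ltr_nat.
have hM : M / b.+1%:R < eps.
  rewrite ltr_pdivrMr // mulrC -ltr_pdivrMr //.
have := claim b.+1 isT.
rewrite expr2 -mulrA ler_pM2l // => hc.
have : nD * (K + E / b.+1%:R) = K * nD + M / b.+1%:R by rewrite /M; ring.
move=> eq; rewrite eq in hc.
rewrite /eps in hM. by move: hc; rewrite -lerBlDl (lt_geF hM).
Qed.


Theorem proposition3 (R : realType) (n : nat) (a : 'rV[R]_n -> R)
  (La C0 C1 : R) :
  convex_fun a -> L_smooth La a ->
  0 < C0 -> 0 <= C1 ->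
  (forall x, norm2 (grad a x) ^+ 2 <= C0 + C1 * `|a x|) ->
  forall delta : R, 0 < delta ->
    L_smooth (La + C1 / 4 + C0 / (4 * delta)) (fun x => softplus delta (a x)).
Proof.
move=> _ [da hL] C0p C10 hg d d0; split.
  move=> x.
  have dsp : differentiable (softplus d) (a x).
    by apply/derivable1_diffP; case: (is_derive_softplus (a x) d0).
  exact: (differentiable_comp (da x) dsp).
move=> x y; rewrite !grad_softplus //.
exact: (@lip_main R n a La C0 C1 d da hL hg d0 (ltW C0p) C10).
Qed.
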